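(* Let $\{Q_\zeta\}_{\zeta}$ be a family of Markov kernels on $\mathsf X$ and let $P_\zeta$ and $\tilde P_\zeta$ be the Markov kernels induced by the AI-CPF with proposal $Q_\zeta$, as defined in the context. Then for all $\zeta,\zeta'$, \[ d(P_\zeta,P_{\zeta'})\le N\,d(Q_\zeta,Q_{\zeta'})\quad\text{and}\quad d(\tilde P_\zeta,\tilde P_{\zeta'})\le N\,d(Q_\zeta,Q_{\zeta'}). \]
   Context: For a finite signed measure $\xi$, $\|\xi\|_{\mathrm{tv}}=\sup_{\|f\|_\infty\le1}\xi(f)$; for Markov kernels $P,P'$, $d(P,P')=\sup_x\|P(x,\cdot)-P'(x,\cdot)\|_{\mathrm{tv}}$. Model: $\pi(\mathrm{d}x_{1:T})\propto M_1(\mathrm{d}x_1)G_1(x_1)\prod_{k=2}^TM_k(x_{k-1},\mathrm{d}x_k)G_k(x_{1:k})$ on $\mathsf X^T$ (with $G_k(x_{1:k})=G_k(x_{k-1},x_k)$ and $M_k$ having densities when backward sampling is used). F-CPF$(x^*_{2:T},X_1^{(1:N)})$ with $N$ particles: set $\mathbf X_1^{(i)}=X_1^{(i)}$; for $k=1,\dots,T-1$: normalised weights $W_k^{(i)}\propto G_k(\mathbf X_k^{(i)})$; $A_k^{(2:N)}$ i.i.d. categorical$(W_k^{(1:N)})$, $A_k^{(1)}=1$; $X_{k+1}^{(i)}\sim M_{k+1}(X_k^{(A_k^{(i)})},\cdot)$ for $i\ge2$, $X_{k+1}^{(1)}=x^*_{k+1}$; $\mathbf X_{k+1}^{(i)}=(\mathbf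 X_k^{(A_k^{(i)})},X_{k+1}^{(i)})$; finally $W_T^{(i)}\propto G_T(\mathbf X_T^{(i)})$. Path selection either by ancestor tracing ($B_T\sim\mathrm{Categ}(W_T)$, $B_k=A_k^{(B_{k+1})}$, $V^{(1:N)}=W_1^{(1:N)}$) or backward sampling ($B_T\sim\mathrm{Categ}(W_T)$, $B_k\sim\mathrm{Categ}(V_k)$ with $V_k^{(i)}\propto W_k^{(i)}M_{k+1}(X_k^{(i)},X_{k+1}^{(B_{k+1})})G_{k+1}(X_k^{(i)},X_{k+1}^{(B_{k+1})})$, $V^{(1:N)}=V_1^{(1:N)}$). AI-CPF$(x^*_{1:T};Q_\zeta)$: draw $X_0\sim Q_\zeta(x^*_1,\cdot)$; draw $X_1^{(2:N)}$ i.i.d. $\sim Q_\zeta(X_0,\cdot)$, set $X_1^{(1)}=x^*_1$; run F-CPF and path selection. $P_\zeta$ is the Markov kernel from $x^*_{1:T}$ to $(X_1^{(B_1)},\dots,X_T^{(B_T)})$; $\tilde P_\zeta$ (with backward sampling) is the Markov kernel from $(x^*_{1:T},\cdot)$ to $\big((X_1^{(B_1)},\dots,X_T^{(B_T)}),(B_1,V^{(1:N)},X_1^{(1:N)})\big)$. *)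

(* Defs.v *)
From HB Require Import structures.
From mathcomp Require Import all_boot all_order all_algebra.
From mathcomp Require Import all_classical all_reals.
From mathcomp Require Import all_analysis measurable_realfun.
Set Implicit Arguments.
Unset Strict Implicit.
Unset Printing Implicit Defensive.
Import Order.TTheory GRing.Theory Num.Theory.
Local Open Scope classical_set_scope.
Local Open Scope ring_scope.

(* Markov kernels are represented by their action on test functions:        *)
(* i.e. a random variable with values in A is represented by the map        *)
(* f |-> E[f(output)].  This is the continuation (integration) monad; a     *)
(* sampling step from a measure mu is f |-> \int[mu]_x f x.                 *)
Definition prog (R : realType) (A : Type) := (A -> \bar R) -> \bar R.

Definition pret {R : realType} {A} (a : A) : prog R A := fun k => k a.
Definition pbind {R : realType} {A B} (p : prog R A) (f : A -> prog R B) : prog R B :=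
  fun k => p (fun a => f a k).
Definition psample {R : realType} {d} {X : measurableType d}
  (mu : {measure set X -> \bar R}) : prog R X :=
  fun k => (\int[mu]_x k x)%E.
(* Categ(w(0), ..., w(N-1)) on {0,...,N-1} (particle indices are 0-based: *)
(* index 0 is the paper's particle 1, the reference particle).           *)
Definition pcateg {R : realType} (N : nat) (w : nat -> R) : prog R nat :=
  fun k => (\sum_(0 <= i < N) (w i)%:E * k i)%E.
Fixpoint piid {R : realType} {A} (n : nat) (p : prog R A) : prog R (seq A) :=
  match n with
  | 0 => pret [::]
  | n'.+1 => pbind p (fun a => pbind (piid n' p) (fun s => pret (a :: s)))
  end.

Definition tv_dist {R : realType} {d} {Y : measurableType d}
  (mu nu : prog R Y) : \bar R :=
  ereal_sup [set (mu (fun y => (f y)%:E) - nu (fun y => (f y)%:E))%E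
            | f in [set f : Y -> R | measurable_fun setT f /\
                                     forall y, `|f y| <= 1]].

Definition kdist {R : realType} {d d'} {Z : measurableType d} {Y : measurableType d'}
  (P P' : Z -> prog R Y) : \bar R :=
  ereal_sup [set tv_dist (P z) (P' z) | z in setT].

Definition kprog {R : realType} {d d'} {Z : measurableType d} {X : measurableType d'}
  (Q : Z -> probability X R) : Z -> prog R X := fun z => psample (Q z).

Definition markov_kernel {R : realType} {d d'} {Z : measurableType d} {X : measurableType d'}
  (Q : Z -> probability X R) : Prop :=
  forall A, measurable A -> measurable_fun [set: Z] (Q ^~ A).

Section CPF.
Context {R : realType} {d : measure_display} {X : measurableType d}.
Variables (N T : nat).
(* M k : the Markov kernel M_k (k = 2..T), G k : the potential G_k acting on
   paths x_{1:k} given as lists [:: x_1; ...; x_k]. *)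
Variables (M : nat -> X -> probability X R) (G : nat -> seq X -> R).

(* state after time k:
   (hx, ha, hp) with hx = [:: X_1; ...; X_k]   (particle arrays),
                     ha = [:: A_1; ...; A_(k-1)] (ancestor arrays),
                     hp = [:: P_1; ...; P_k]   (P_j i = path bold-X_j^(i)). *)
Definition state := (seq (nat -> X) * seq (nat -> nat) * seq (nat -> seq X))%type.

Definition wts (k : nat) (P : nat -> seq X) (i : nat) : R :=
  G k (P i) / \sum_(0 <= j < N) G k (P j).

Definition nullX : nat -> X := fun _ => point.
Definition nullP : nat -> seq X := fun _ => [::].

(* one step k -> k+1 of the F-CPF, with reference x*_{k+1} = nth xstar k *)
Definition fstep (xstar : seq X) (k : nat) (st : state) : prog R state :=
  let: (hx, ha, hp) := st in
  let Xk := last nullX hx in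
  let Pk := last nullP hp in
  pbind (piid N.-1 (pbind (pcateg N (wts k Pk)) (fun a =>
                    pbind (psample (M k.+1 (Xk a))) (fun x => pret (a, x)))))
   (fun dr =>
      let A i := if i == 0%N then 0%N else (nth (0%N, point) dr i.-1).1 in
      let Xn i := if i == 0%N then nth point xstar k
                  else (nth (0%N, point) dr i.-1).2 in
      pret (rcons hx Xn, rcons ha A, rcons hp (fun i => rcons (Pk (A i)) (Xn i)))).

(* forward pass of the F-CPF up to time m+1 *)
Fixpoint fwd (xstar : seq X) (X1 : nat -> X) (m : nat) : prog R state :=
  match m with
  | 0 => pret ([:: X1], [::], [:: fun i => [:: X1 i]])
  | m'.+1 => pbind (fwd xstar X1 m') (fstep xstar m'.+1)
  end.

(* output of path selection: (selected path, (B_1, (V^(1:N), X_1^(1:N)))) *)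
Definition aux_out := (nat * (N.-tuple R * N.-tuple X))%type.
Definition out := (T.-tuple X * aux_out)%type.

Definition mk_out (hx : seq (nat -> X)) (Bs : seq nat) (V : nat -> R) : out :=
  ([tuple (nth nullX hx i) (nth 0%N Bs i) | i < T],
   (head 0%N Bs, ([tuple V i | i < N], [tuple head nullX hx i | i < N]))).

(* ancestor tracing: from [:: A_(T-1); ...; A_1] and B_T, the list
   [:: B_1; ...; B_T] with B_k = A_k^(B_(k+1)) *)
Fixpoint trace (rha : seq (nat -> nat)) (b : nat) : seq nat :=
  match rha with
  | [::] => [:: b]
  | A :: r => rcons (trace r (A b)) b
  end.

Definition sel_at (st : state) : prog R out :=
  let: (hx, ha, hp) := st in
  pbind (pcateg N (wts T (last nullP hp))) (fun bT =>
    pret (mk_out hx (trace (rev ha) bT) (wts 1 (head nullP hp)))).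

(* backward sampling, with M_k(x, dy) = m k x y nu(dy) and
   G_k(x_{1:k}) = g k x_{k-1} x_k *)
Variables (m g : nat -> X -> X -> R).

Definition vwts (st : state) (k : nat) (bn : nat) (i : nat) : R :=
  let: (hx, ha, hp) := st in
  let Xk := nth nullX hx k.-1 in
  let Xk1 := nth nullX hx k in
  let u j := wts k (nth nullP hp k.-1) j * m k.+1 (Xk j) (Xk1 bn)
                                        * g k.+1 (Xk j) (Xk1 bn) in
  u i / \sum_(0 <= j < N) u j.

(* draws B_j, ..., B_1 given B_(j+1) = bn; returns [:: (B_1,V_1); ...; (B_j,V_j)] *)
Fixpoint bwd (st : state) (j : nat) (bn : nat) : prog R (seq (nat * (nat -> R))) :=
  match j with
  | 0 => pret [::]
  | j'.+1 => let V := vwts st j'.+1 bn in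
      pbind (pcateg N V) (fun b =>
        pbind (bwd st j' b) (fun r => pret (rcons r (b, V))))
  end.

(* (convention: when T = 1, V_T := W_T, the law of B_T) *)
Definition sel_bs (st : state) : prog R out :=
  let: (hx, ha, hp) := st in
  let WT := wts T (last nullP hp) in
  pbind (pcateg N WT) (fun bT =>
    pbind (bwd st T.-1 bT) (fun r =>
      let full := rcons r (bT, WT) in
      pret (mk_out hx (map fst full) (head (0%N, WT) full).2))).

Definition aicpf (bs : bool) (Q : X -> probability X R) (xstar : seq X) : prog R out :=
  let x1 := nth point xstar 0 in
  pbind (psample (Q x1)) (fun x0 =>
  pbind (piid N.-1 (psample (Q x0))) (fun xs =>
    let X1 i := if i == 0%N then x1 else nth point xs i.-1 in
    pbind (fwd xstar X1 T.-1) (fun st =>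
      if bs then sel_bs st else sel_at st))).

Definition P_aicpf (bs : bool) (Q : X -> probability X R) :
  T.-tuple X -> prog R (T.-tuple X) :=
  fun xstar => pbind (aicpf bs Q xstar) (fun o => pret o.1).

Definition Ptilde_aicpf (Q : X -> probability X R) : out -> prog R out :=
  fun z => aicpf true Q z.1.

End CPF.

Arguments P_aicpf {R d X} N T M G m g bs Q _ _.
Arguments Ptilde_aicpf {R d X} N T M G m g Q _ _.

(* Main.v *)
Require Import Defs.
From HB Require Import structures.
From mathcomp Require Import all_boot all_order all_algebra.
From mathcomp Require Import all_classical all_reals.
From mathcomp Require Import all_analysis measurable_realfun.
From mathcomp Require Import lra.
Import Order.TTheory GRing.Theory Num.Theory.
Local Open Scope classical_set_scope.
Local Open Scope ring_scope.
Set Implicit Arguments.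
Unset Strict Implicit.
Unset Printing Implicit Defensive.
Section KF.
Context {R : realType} {d dY} {X : measurableType d} {Y : measurableType dY}.
Variable (mu : X -> probability Y R).
Definition kf (hmu : forall U, measurable U -> measurable_fun setT (mu ^~ U)) :
  X -> {measure set Y -> \bar R} := fun x => mu x.
Variable hmu : forall U, measurable U -> measurable_fun setT (mu ^~ U).
HB.instance Definition _ := isKernel.Build _ _ X Y R (kf hmu) hmu.
Lemma kf_uub : measure_fam_uub (kf hmu).
Proof. exists 2%R => x; rewrite /kf /= probability_setT lte_fin; lra. Qed.
HB.instance Definition _ := Kernel_isFinite.Build _ _ X Y R (kf hmu) kf_uub.
End KF.
Arguments kf {R d dY X Y mu} hmu.

Lemma mcst d (W : measurableType d) d' (T : measurableType d') (c : T) :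
  measurable_fun setT (fun _ : W => c).
Proof. exact: measurable_cst. Qed.

Section Frame.
Context {R : realType}.
Local Open Scope ereal_scope.

Definition fam (A : Type) := forall d (W : measurableType d), (W -> A) -> Prop.

Definition kgood {A} (P : fam A) dZ (Z : measurableType dZ) (k : Z -> A -> \bar R) :=
  forall d (W : measurableType d) (g : W -> Z) (u : W -> A),
    measurable_fun setT g -> P d W u ->
    measurable_fun setT (fun w => k (g w) (u w)) /\ (forall w, `|k (g w) (u w)| <= 1).

Definition pgood {A} (P : fam A) dY (Y : measurableType dY) (p : Y -> prog R A) :=
  forall dZ (Z : measurableType dZ) (k : Z -> A -> \bar R), kgood P k ->
    measurable_fun setT (fun zy : Z * Y => p zy.2 (k zy.1)) /\
    (forall z y, `|p y (k z)| <= 1).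

Definition fgood {A B} (P : fam A) (Q : fam B) dY (Y : measurableType dY)
  (f : Y -> A -> prog R B) :=
  forall d (W : measurableType d) (g : W -> Y) (u : W -> A),
    measurable_fun setT g -> P d W u -> pgood Q (fun w => f (g w) (u w)).

Definition fclosed {A} (P : fam A) :=
  forall d (W : measurableType d) d' (W' : measurableType d') (h : W' -> W) (u : W -> A),
    measurable_fun setT h -> P d W u -> P d' W' (u \o h).

Definition mfam d' (X : measurableType d') : fam X :=
  fun d W u => measurable_fun setT u.

Arguments mfam {d'} X _ _ _ /.
Arguments kgood {A} P {dZ Z} k.
Arguments pgood {A} P {dY Y} p.
Arguments fgood {A B} P Q {dY Y} f.
Arguments fclosed {A} P.

Lemma mfam_closed d' (X : measurableType d') : fclosed (mfam X).
Proof. by move=> d W d0 W' h u mh mu; exact: measurableT_comp. Qed.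

Lemma pgood_comp {A} (P : fam A) dY (Y : measurableType dY) dY' (Y' : measurableType dY')
  (p : Y -> prog R A) (h : Y' -> Y) :
  measurable_fun setT h -> pgood P p -> pgood P (p \o h).
Proof.
move=> mh hp dZ Z k hk; have [m b] := hp _ _ _ hk; split; last by move=> z y; exact: b.
have -> : (fun zy : Z * Y' => (p \o h) zy.2 (k zy.1)) =
  (fun zy : Z * Y => p zy.2 (k zy.1)) \o (fun zy : Z * Y' => (zy.1, h zy.2)) by [].
apply: (measurableT_comp m); apply: measurable_fun_pair.
  exact: measurable_fst.
exact: measurableT_comp mh measurable_snd.
Qed.

Lemma pret_good {A} (P : fam A) (hP : fclosed P) dY (Y : measurableType dY) (u : Y -> A) :
  P _ _ u -> pgood P (fun y => pret (u y)).
Proof.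
move=> hu dZ Z k hk.
have [m b] := hk _ (Z * Y)%type fst (u \o snd) measurable_fst
  (hP _ _ _ _ snd u measurable_snd hu).
split => //; move=> z y; exact: (b (z, y)).
Qed.

Lemma pbind_good {A B} (P : fam A) (Q : fam B) dY (Y : measurableType dY)
  (p : Y -> prog R A) (f : Y -> A -> prog R B) :
  pgood P p -> fgood P Q f -> pgood Q (fun y => pbind (p y) (f y)).
Proof.
move=> hp hf dZ Z k hk.
pose k' := fun (zy : Z * Y) a => f zy.2 a (k zy.1).
have hk' : kgood P k'.
  move=> d W g u mg hu.
  have [m b] := hf _ _ (snd \o g) u (measurableT_comp measurable_snd mg) hu _ _ k hk.
  split; last by move=> w; exact: (b (g w).1 w).
  have -> : (fun w => k' (g w) (u w)) =
    (fun zw : Z * W => f (g zw.2).2 (u zw.2) (k zw.1)) \o (fun w => ((g w).1, w)) by [].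
  apply: (measurableT_comp m); apply: measurable_fun_pair.
    exact: measurableT_comp measurable_fst mg.
  exact: (@measurable_id _ _ setT).
have [m b] := hp _ _ _ hk'.
split; last by move=> z y; exact: (b (z, y) y).
have -> : (fun zy : Z * Y => pbind (p zy.2) (f zy.2) (k zy.1)) =
  (fun zy : (Z * Y) * Y => p zy.2 (k' zy.1)) \o (fun zy => (zy, zy.2)) by [].
apply: (measurableT_comp m); apply: measurable_fun_pair.
  exact: (@measurable_id _ _ setT).
exact: measurable_snd.
Qed.

Lemma bounded_int d' (X : measurableType d') (mu : probability X R) (h : X -> \bar R) (c : R) :
  measurable_fun setT h -> (forall x, `|h x| <= c%:E) ->
  mu.-integrable setT h /\ `|\int[mu]_x h x| <= c%:E.
Proof.
move=> mh hb.
have hI : \int[mu]_x `|h x| <= c%:E.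
  apply: (@le_trans _ _ (\int[mu]_x (cst c%:E) x)).
    apply: ge0_le_integral => //.
    by apply: measurableT_comp.
  rewrite integral_cst // (_ : _ [set: X] = 1) ?mule1 //; exact: probability_setT.
split.
  apply/integrableP; split => //; exact: (le_lt_trans hI (ltry _)).
exact: le_trans (le_abse_integral _ _ mh) hI.
Qed.

Lemma psample_good d' (X : measurableType d') dY (Y : measurableType dY)
  (mu : Y -> probability X R)
  (hmu : forall U, measurable U -> measurable_fun setT (mu ^~ U)) :
  pgood (mfam X) (fun y => psample (mu y)).
Proof.
move=> dZ Z k hk.
have [mh bh] := hk _ ((Z * Y) * X)%type (fst \o fst) snd
  (measurableT_comp measurable_fst measurable_fst) measurable_snd.
have hnu : forall U, measurable U -> measurable_fun setT ((fun zy : Z * Y => mu zy.2) ^~ U).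
  by move=> U mU; exact: measurableT_comp (hmu U mU) measurable_snd.
split; last first.
  move=> z y; rewrite /psample.
  have mz : measurable_fun setT (k z).
    have [m _] := hk _ X (cst z) id (measurable_cst _) (@measurable_id _ _ setT).
    exact: m.
  have bz : forall x, `|k z x| <= 1%:E.
    move=> x; have [_ b] := hk _ X (cst z) id (measurable_cst _) (@measurable_id _ _ setT).
    exact: b.
  by have [] := bounded_int (mu y) mz bz.
rewrite /psample.
have -> : (fun zy : Z * Y => \int[mu zy.2]_x k zy.1 x) =
   (fun zy => \int[kf hnu zy]_x (fun w : (Z * Y) * X => k w.1.1 w.2)^\+ (zy, x)
              - \int[kf hnu zy]_x (fun w : (Z * Y) * X => k w.1.1 w.2)^\- (zy, x)).
  apply/funext => zy; rewrite [LHS]integralE; congr (_ - _); apply: eq_integral => x _.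
    by rewrite !funeposE.
  by rewrite !funenegE.
apply: emeasurable_funB.
  have H := measurable_fun_integral_finite_kernel _ (kf hnu)
    (fun z => funepos_ge0 _ z) (measurable_funepos mh).
  exact: H.
have H := measurable_fun_integral_finite_kernel _ (kf hnu)
  (fun z => funeneg_ge0 _ z) (measurable_funeneg mh).
exact: H.
Qed.

End Frame.
Arguments mfam {d'} X _ _ _ /.
Arguments kgood {R A} P {dZ Z} k.
Arguments pgood {R A} P {dY Y} p.
Arguments fgood {R A B} P Q {dY Y} f.
Arguments fclosed {A} P.

Section Frame2.
Context {R : realType}.
Local Open Scope ereal_scope.

Lemma sum_bound n (w : nat -> R) (k : nat -> \bar R) :
  (forall i, (0 <= w i)%R) -> (forall i, `|k i| <= 1) ->
  `|pcateg n w k| <= (\sum_(0 <= i < n) w i)%:E.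
Proof.
move=> w0 k1; rewrite /pcateg; elim: n => [|n IH]; first by rewrite !big_geq // abse0.
rewrite !big_nat_recr //=; apply: le_trans (lee_abs_add _ _) _.
rewrite EFinD; apply: leeD => //.
rewrite abseM gee0_abs ?lee_fin //.
by rewrite -[X in _ <= X]mule1; apply: lee_pmul; rewrite ?lee_fin.
Qed.

Lemma pcateg_good dY (Y : measurableType dY) (n : nat) (w : Y -> nat -> R) :
  (forall i, measurable_fun setT (fun y => w y i)) -> (forall y i, (0 <= w y i)%R) ->
  (forall y, (\sum_(0 <= i < n) w y i <= 1)%R) ->
  pgood (mfam nat) (fun y => pcateg n (w y)).
Proof.
move=> mw w0 w1 dZ Z k hk.
have mk : forall i, measurable_fun setT (fun z => k z i) /\ (forall z, `|k z i| <= 1).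
  move=> i; have [m b] := hk _ Z id (cst i) (@measurable_id _ _ setT) (measurable_cst _).
  by split.
split.
  rewrite /pcateg; apply: emeasurable_sum => i.
  apply: emeasurable_funM.
    apply/measurable_EFinP; exact: measurableT_comp (mw i) measurable_snd.
  exact: measurableT_comp (mk i).1 measurable_fst.
move=> z y.
apply: (le_trans (sum_bound n (w0 y) (fun i => (mk i).2 z))).
by rewrite lee_fin.
Qed.

Definition seqf d' (A : measurableType d') (n : nat) : fam (seq A) :=
  fun d W u => (forall w, size (u w) = n) /\
               forall a0 i, measurable_fun setT (fun w => nth a0 (u w) i).

#[global] Arguments seqf {d'} A n _ _ _ /.

Lemma seqf_closed d' (A : measurableType d') n : fclosed (seqf A n).
Proof.
move=> d W d0 W' h u mh [hs hm]; split; first by move=> w; exact: hs.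
move=> a0 i.
exact: measurableT_comp (hm a0 i) mh.
Qed.

Lemma piid_good d' (A : measurableType d') n : forall dY (Y : measurableType dY)
  (p : Y -> prog R A),
  pgood (mfam A) p -> pgood (seqf A n) (fun y => piid n (p y)).
Proof.
elim: n => [|n IH] dY Y p hp.
  by apply: (pret_good (@seqf_closed _ A 0) (u := fun _ => [::])); split => // a0 i; exact: mcst.
apply: (pbind_good hp) => dW W g u mg mu.
apply: (pbind_good (IH _ _ _ (pgood_comp mg hp))).
move=> dW' W' g' u' mg' [hs hm].
apply: (pret_good (@seqf_closed _ A n.+1)); split.
  by move=> w /=; rewrite hs.
move=> a0 [|i] /=.
  exact: measurableT_comp mu mg'.
exact: hm.
Qed.

Lemma meas_index d (W : measurableType d) d' (T' : measurableType d')
  (F : nat -> W -> T') (u : W -> nat) :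
  (forall i, measurable_fun setT (F i)) -> measurable_fun setT u ->
  measurable_fun setT (fun w => F (u w) w).
Proof.
move=> mF mu _ B mB; rewrite setTI.
have -> : (fun w => F (u w) w) @^-1` B =
    \bigcup_i (u @^-1` [set i] `&` F i @^-1` B).
  apply/seteqP; split => w /=.
    by move=> hB; exists (u w) => //.
  by move=> [i _ [/= <-]].
apply: bigcupT_measurable => i; apply: measurableI.
  by have := mu measurableT [set i] I; rewrite setTI.
by have := mF i measurableT B mB; rewrite setTI.
Qed.

Lemma measurable_inv : measurable_fun setT (@GRing.inv R).
Proof.
have -> : [set: R] = [set~ 0%R] `|` [set 0%R].
  by rewrite setUC setUCr.
apply/measurable_funU => //.
  exact: measurableC.
split.
  apply: open_continuous_measurable_fun.
    apply: closed_openC; apply: accessible_closed_set1.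
    exact: hausdorff_accessible.
  move=> x; rewrite inE /= => hx; apply: inv_continuous; exact/eqP.
move=> _ B mB.
rewrite (_ : _ `&` _ = [set 0%R] `&` (fun _ : R => 0%R) @^-1` B).
  apply: measurableI => //; rewrite preimage_cst; case: ifP => _.
    exact: measurableT.
  exact: measurable0.
by apply/seteqP; split=> x [/= -> hb]; split => //=; rewrite ?invr0 in hb *.
Qed.

Lemma measurable_div d (W : measurableType d) (f g : W -> R) :
  measurable_fun setT f -> measurable_fun setT g ->
  measurable_fun setT (fun w => f w / g w)%R.
Proof.
move=> mf mg; apply: measurable_funM => //.
exact: measurableT_comp measurable_inv mg.
Qed.

Lemma fin_bound (x : \bar R) (c : R) : `|x| <= c%:E -> x \is a fin_num.
Proof. by case: x. Qed.

Definition tvle d' (X : measurableType d') (mu1 mu2 : probability X R) (dl : R) :=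
  forall f : X -> R, measurable_fun setT f -> (forall x, (`|f x| <= 1)%R) ->
    \int[mu1]_x (f x)%:E - \int[mu2]_x (f x)%:E <= dl%:E.

Lemma tvle_abs d' (X : measurableType d') (mu1 mu2 : probability X R) dl
  (h : X -> \bar R) :
  tvle mu1 mu2 dl -> measurable_fun setT h -> (forall x, `|h x| <= 1) ->
  `|\int[mu1]_x h x - \int[mu2]_x h x| <= dl%:E.
Proof.
move=> htv mh hb.
pose f := fun x => fine (h x).
have hf : forall x, h x = (f x)%:E.
  by move=> x; rewrite /f fineK //; exact: (fin_bound (hb x)).
have mf : measurable_fun setT f.
  apply/measurable_EFinP; rewrite (_ : EFin \o f = h) //.
  by apply/funext => x /=; rewrite -hf.
have bf : forall x, (`|f x| <= 1)%R.
  by move=> x; rewrite -lee_fin -abse_EFin -hf.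
have e1 : \int[mu1]_x h x = \int[mu1]_x (f x)%:E.
  by apply: eq_integral => x _; rewrite hf.
have e2 : \int[mu2]_x h x = \int[mu2]_x (f x)%:E.
  by apply: eq_integral => x _; rewrite hf.
have mfE : measurable_fun setT (fun x => (f x)%:E).
  by apply/measurable_EFinP.
have bE : forall x, `|(f x)%:E| <= 1 by move=> x; rewrite abse_EFin lee_fin.
have [i1 b1] := bounded_int mu1 mfE bE.
have [i2 b2] := bounded_int mu2 mfE bE.
have h1 := htv f mf bf.
have mg : measurable_fun setT (fun x => - f x)%R by exact: measurableT_comp mf.
have bg : forall x, (`|(- f x)%R| <= 1)%R by move=> x; rewrite normrN.
have h2 := htv _ mg bg.
have eN : forall (mu : probability X R), mu.-integrable setT (fun x => (f x)%:E) ->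
    \int[mu]_x (- f x)%:E = (-1)%:E * \int[mu]_x (f x)%:E.
  move=> mu hi; rewrite -integralZl //; apply: eq_integral => x _.
  by rewrite -EFinM mulN1r.
rewrite (eN _ i1) (eN _ i2) in h2.
rewrite e1 e2.
move: (fin_bound b1) (fin_bound b2) h1 h2.
set a := \int[mu1]_x (f x)%:E; set b := \int[mu2]_x (f x)%:E.
move=> fa fb; rewrite -(fineK fa) -(fineK fb) -!EFinM -!EFinB abse_EFin !lee_fin.
move=> h1 h2; rewrite ler_norml; apply/andP; split; lra.
Qed.

Lemma step_bound d' (X : measurableType d') (mu1 mu2 : probability X R) dl c
  (A1 A2 : X -> \bar R) :
  tvle mu1 mu2 dl -> measurable_fun setT A1 -> measurable_fun setT A2 ->
  (forall x, `|A1 x| <= 1) -> (forall x, `|A2 x| <= 1) ->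
  (forall x, `|A1 x - A2 x| <= c%:E) ->
  `|\int[mu1]_x A1 x - \int[mu2]_x A2 x| <= (c + dl)%:E.
Proof.
move=> htv m1 m2 b1 b2 hc.
have [i11 b11] := bounded_int mu1 m1 b1.
have [i12 b12] := bounded_int mu1 m2 b2.
have [_ b22] := bounded_int mu2 m2 b2.
have hd := (bounded_int mu1 (emeasurable_funB m1 m2) hc).2.
rewrite (integralB _ i11 i12) in hd => //.
have ht := tvle_abs htv m2 b2.
move: (fin_bound b11) (fin_bound b12) (fin_bound b22) hd ht.
set a := \int[mu1]_x A1 x; set b := \int[mu1]_x A2 x; set e := \int[mu2]_x A2 x.
move=> fa fb fe; rewrite -(fineK fa) -(fineK fb) -(fineK fe) -!EFinB !abse_EFin !lee_fin.
move=> hd ht; apply: le_trans (ler_distD (fine b) _ _) _.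
exact: lerD.
Qed.

Lemma tvle_unit_kernel d' (X : measurableType d') (mu : probability X R) :
  forall U, measurable U -> measurable_fun setT ((fun _ : unit => mu) ^~ U).
Proof. by move=> U mU; exact: mcst. Qed.

Lemma piid_tele d' (X : measurableType d') (mu1 mu2 : probability X R) dl n :
  tvle mu1 mu2 dl -> forall phi : seq X -> \bar R,
  kgood (seqf X n) (fun _ : unit => phi) ->
  `|piid n (psample mu1) phi - piid n (psample mu2) phi| <= (n%:R * dl)%:E.
Proof.
move=> htv; elim: n => [|n IH] phi hphi.
  have hs0 : seqf X 0 _ unit (fun _ => [::]) by split => // a0 i; exact: mcst.
  have [_ b] := hphi _ unit id (fun _ => [::]) (@measurable_id _ _ setT) hs0.
  by rewrite /= subee ?mul0r ?abse0 //; exact: (fin_bound (b tt)).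
pose ka := fun (a : X) (s : seq X) => phi (a :: s).
have hka : kgood (seqf X n) ka.
  move=> dW W g u mg [hs hm].
  have := hphi _ W (fun _ => tt) (fun w => g w :: u w) (mcst _).
  case.
    split; first by move=> w /=; rewrite hs.
    by move=> a0 [|i] /=; [exact: mg | exact: hm].
  by move=> m b; split.
have pg : forall mu : probability X R,
   pgood (seqf X n) (fun _ : unit => piid n (psample mu)).
  move=> mu; apply: (piid_good (p := fun _ : unit => psample mu)).
  exact: psample_good (tvle_unit_kernel mu).
have mA : forall mu : probability X R,
    measurable_fun setT (fun a => piid n (psample mu) (ka a)) /\
    (forall a, `|piid n (psample mu) (ka a)| <= 1).
  move=> mu; have [m b] := pg mu _ _ _ hka; split.
    have -> : (fun a => piid n (psample mu) (ka a)) =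
      (fun zy : X * unit => piid n (psample mu) (ka zy.1)) \o (fun a => (a, tt)) by [].
    apply: (measurableT_comp m); apply: measurable_fun_pair.
      exact: (@measurable_id _ _ setT).
    exact: mcst.
  by move=> a; exact: b a tt.
have hA : forall a, `|piid n (psample mu1) (ka a) - piid n (psample mu2) (ka a)|
     <= (n%:R * dl)%:E.
  move=> a; apply: IH => dW W g u mg hu.
  exact: hka _ W (fun _ => a) u (mcst _) hu.
have := step_bound htv (mA mu1).1 (mA mu2).1 (mA mu1).2 (mA mu2).2 hA.
by rewrite -[(n.+1)%:R]natr1 mulrDl mul1r.
Qed.

Lemma core d' (X : measurableType d') (Q1 Q2 : X -> probability X R)
  (hQ1 : forall U, measurable U -> measurable_fun setT (Q1 ^~ U))
  (hQ2 : forall U, measurable U -> measurable_fun setT (Q2 ^~ U))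
  dl n (htv : forall x, tvle (Q1 x) (Q2 x) dl) (x1 : X) (K : seq X -> \bar R) :
  kgood (seqf X n) (fun _ : unit => K) ->
  `|\int[Q1 x1]_x0 piid n (psample (Q1 x0)) K -
    \int[Q2 x1]_x0 piid n (psample (Q2 x0)) K| <= (n.+1%:R * dl)%:E.
Proof.
move=> hK.
have mA : forall (Q : X -> probability X R),
    (forall U, measurable U -> measurable_fun setT (Q ^~ U)) ->
    measurable_fun setT (fun x0 => piid n (psample (Q x0)) K) /\
    (forall x0, `|piid n (psample (Q x0)) K| <= 1).
  move=> Q hQ.
  have pg : pgood (seqf X n) (fun x0 => piid n (psample (Q x0))).
    apply: (piid_good (p := fun x0 => psample (Q x0))).
    exact: psample_good hQ.
  have [m b] := pg _ _ _ hK; split.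
    have -> : (fun x0 => piid n (psample (Q x0)) K) =
      (fun zy : unit * X => piid n (psample (Q zy.2)) K) \o (fun a => (tt, a)) by [].
    apply: (measurableT_comp m); apply: measurable_fun_pair.
      exact: mcst.
    exact: (@measurable_id _ _ setT).
  by move=> a; exact: b tt a.
have hA : forall x0, `|piid n (psample (Q1 x0)) K - piid n (psample (Q2 x0)) K|
     <= (n%:R * dl)%:E.
  by move=> x0; apply: piid_tele.
have := step_bound (htv x1) (mA Q1 hQ1).1 (mA Q2 hQ2).1 (mA Q1 hQ1).2 (mA Q2 hQ2).2 hA.
by rewrite -[(n.+1)%:R]natr1 mulrDl mul1r.
Qed.

End Frame2.

Section CPF3.
Context {R : realType} {d : measure_display} {X : measurableType d}.
Variables (N T : nat) (M : nat -> X -> probability X R) (G : nat -> seq X -> R).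
Hypothesis hM : forall k, (1 < k <= T)%N -> markov_kernel (M k).
Hypothesis hGm : forall k, (0 < k <= T)%N ->
  measurable_fun setT (fun p : k.-tuple X => G k p).
Hypothesis hGpos : forall k (p : k.-tuple X), (0 < k <= T)%N -> 0 < G k p.
Hypothesis hT : (0 < T)%N.

Lemma tuple_of_seq k (s : seq X) : size s = k ->
  [tuple nth point s (nat_of_ord l) | l < k] = s :> seq X.
Proof.
move=> hs; apply: (@eq_from_nth _ point); first by rewrite size_tuple hs.
move=> i; rewrite size_tuple => hi.
by move: (nth_mktuple (fun l : 'I_k => nth point s l) point (Ordinal hi)) => /= ->.
Qed.

Lemma G_meas k (hk : (0 < k <= T)%N) dW (W : measurableType dW) (P : W -> seq X) :
  (forall w, size (P w) = k) -> (forall l, measurable_fun setT (fun w => nth point (P w) l)) ->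
  measurable_fun setT (fun w => G k (P w)).
Proof.
move=> hs hm.
have -> : (fun w => G k (P w)) = (fun p : k.-tuple X => G k p) \o
    (fun w => [tuple nth point (P w) (nat_of_ord l) | l < k]).
  by apply/funext => w /=; rewrite (tuple_of_seq (hs w)).
apply: measurableT_comp; first exact: hGm.
apply/measurable_fun_tnthP => i.
apply: (eq_measurable_fun (fun w => nth point (P w) i)); last exact: hm.
by move=> w _ /=; rewrite tnth_mktuple.
Qed.

Lemma G_pos k (hk : (0 < k <= T)%N) (s : seq X) : size s = k -> 0 < G k s.
Proof. move=> hs; have hs' : size s == k by rewrite hs. exact: (hGpos (Tuple hs') hk). Qed.

Lemma wts_bounds k (hk : (0 < k <= T)%N) (P : nat -> seq X) :
  (forall i, size (P i) = k) ->
  (forall i, 0 <= wts N G k P i) /\ \sum_(0 <= i < N) wts N G k P i <= 1.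
Proof.
move=> hs; split.
  move=> i; rewrite /wts; apply: divr_ge0; first exact: ltW (G_pos hk (hs i)).
  by apply: sumr_ge0 => j _; exact: ltW (G_pos hk (hs j)).
rewrite /wts -mulr_suml.
have [->|hS] := eqVneq (\sum_(0 <= j < N) G k (P j)) 0; first by rewrite invr0 mulr0 ler01.
by rewrite mulfV.
Qed.

Lemma wts_meas k (hk : (0 < k <= T)%N) dW (W : measurableType dW) (P : W -> nat -> seq X) :
  (forall w i, size (P w i) = k) ->
  (forall i l, measurable_fun setT (fun w => nth point (P w i) l)) ->
  forall i, measurable_fun setT (fun w => wts N G k (P w) i).
Proof.
move=> hs hm i; rewrite /wts; apply: measurable_div.
  by apply: G_meas => // w; exact: hs.
apply: measurable_sum => j; apply: G_meas => // w; exact: hs.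
Qed.

Record stfR k dW (W : measurableType dW) (u : W -> @state d X) : Prop := StfR {
  s_hx : forall w, size (u w).1.1 = k;
  s_ha : forall w, size (u w).1.2 = k.-1;
  s_hp : forall w, size (u w).2 = k;
  m_hx : forall j i, measurable_fun setT (fun w => nth nullX (u w).1.1 j i);
  m_ha : forall j i, measurable_fun setT (fun w => nth (fun _ => 0%N) (u w).1.2 j i);
  s_p : forall j i w, (j < k)%N -> size (nth nullP (u w).2 j i) = j.+1;
  m_p : forall j i l, measurable_fun setT (fun w => nth point (nth nullP (u w).2 j i) l) }.

Definition stf k : fam (@state d X) := fun dW W u => @stfR k dW W u.

Lemma stf_closed k : fclosed (stf k).
Proof.
move=> dW W dW' W' h u mh [h1 h2 h3 h4 h5 h6 h7]; split => //.
- by move=> w; exact: h1.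
- by move=> w; exact: h2.
- by move=> w; exact: h3.
- by move=> j i; exact: measurableT_comp (h4 j i) mh.
- by move=> j i; exact: measurableT_comp (h5 j i) mh.
- by move=> j i w; exact: h6.
- by move=> j i l; exact: measurableT_comp (h7 j i l) mh.
Qed.

Definition Aof (dr : seq (nat * X)) (i : nat) : nat :=
  if i == 0%N then 0%N else (nth (0%N, point) dr i.-1).1.
Definition Xof (xstar : seq X) k (dr : seq (nat * X)) (i : nat) : X :=
  if i == 0%N then nth point xstar k else (nth (0%N, point) dr i.-1).2.
Definition newst xstar k (st : @state d X) (dr : seq (nat * X)) : @state d X :=
  (rcons st.1.1 (Xof xstar k dr), rcons st.1.2 (Aof dr),
   rcons st.2 (fun i => rcons (last nullP st.2 (Aof dr i)) (Xof xstar k dr i))).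
Definition inner k (st : @state d X) : prog R (nat * X) :=
  pbind (pcateg N (wts N G k (last nullP st.2))) (fun a =>
    pbind (psample (M k.+1 (last nullX st.1.1 a))) (fun x => pret (a, x))).

Lemma fstep_eq xstar k st :
  fstep N M G xstar k st = pbind (piid N.-1 (inner k st)) (fun dr => pret (newst xstar k st dr)).
Proof. by case: st => [[hx ha] hp]. Qed.

Lemma Aof_meas dW (W : measurableType dW) n (dr : W -> seq (nat * X)) :
  seqf (nat * X)%type n _ W dr -> forall i, measurable_fun setT (fun w => Aof (dr w) i).
Proof.
move=> [hs hm] [|i]; rewrite /Aof /=; first exact: measurable_cst.
exact: measurableT_comp measurable_fst (hm _ _).
Qed.

Lemma Xof_meas dW (W : measurableType dW) n xstar k (dr : W -> seq (nat * X)) :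
  seqf (nat * X)%type n _ W dr -> forall i, measurable_fun setT (fun w => Xof xstar k (dr w) i).
Proof.
move=> [hs hm] [|i]; rewrite /Xof /=; first exact: measurable_cst.
exact: measurableT_comp measurable_snd (hm _ _).
Qed.

Lemma newst_stf xstar k (hk : (0 < k)%N) dW (W : measurableType dW) (u : W -> @state d X)
  (dr : W -> seq (nat * X)) :
  stf k u -> seqf (nat * X)%type N.-1 _ W dr ->
  stf k.+1 (fun w => newst xstar k (u w) (dr w)).
Proof.
move=> [h1 h2 h3 h4 h5 h6 h7] hdr.
have hl : forall w, last nullP (u w).2 = nth nullP (u w).2 k.-1.
  by move=> w; rewrite -nth_last h3.
split => /=.
- by move=> w; rewrite size_rcons h1.
- by move=> w; rewrite size_rcons h2 prednK.
- by move=> w; rewrite size_rcons h3.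
- move=> j i.
  have -> : (fun w => nth nullX (rcons (u w).1.1 (Xof xstar k (dr w))) j i) =
    (fun w => if (j < k)%N then nth nullX (u w).1.1 j i
              else if j == k then Xof xstar k (dr w) i else point).
    by apply/funext => w; rewrite nth_rcons h1; case: ifP => //; case: ifP.
  case: (j < k)%N; first exact: h4.
  by case: (j == k); [exact: Xof_meas hdr i | exact: measurable_cst].
- move=> j i.
  have -> : (fun w => nth (fun _ => 0%N) (rcons (u w).1.2 (Aof (dr w))) j i) =
    (fun w => if (j < k.-1)%N then nth (fun _ => 0%N) (u w).1.2 j i
              else if j == k.-1 then Aof (dr w) i else 0%N).
    by apply/funext => w; rewrite nth_rcons h2; case: ifP => //; case: ifP.
  case: (j < k.-1)%N; first exact: h5.
  by case: (j == k.-1); [exact: Aof_meas hdr i | exact: measurable_cst].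
- move=> j i w hj; rewrite nth_rcons h3.
  case: ifP => hjk; first exact: h6.
  have -> : j = k by apply/eqP; rewrite eqn_leq -ltnS hj leqNgt hjk.
  by rewrite eqxx size_rcons hl h6 ?prednK // ltn_predL.
- move=> j i l.
  have -> : (fun w => nth point (nth nullP (rcons (u w).2
        (fun i0 => rcons (last nullP (u w).2 (Aof (dr w) i0)) (Xof xstar k (dr w) i0))) j i) l) =
    (fun w => if (j < k)%N then nth point (nth nullP (u w).2 j i) l
              else if j == k then
                (if (l < k)%N then nth point (nth nullP (u w).2 k.-1 (Aof (dr w) i)) l
                 else if l == k then Xof xstar k (dr w) i else point)
              else point).
    apply/funext => w; rewrite nth_rcons h3; case: ifP => // _.
    case: ifP => // _; last by rewrite /nullP /=; case: l.
    by rewrite nth_rcons hl h6 ?prednK // ltn_predL.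
  case: (j < k)%N; first exact: h7.
  case: (j == k); last exact: measurable_cst.
  case: (l < k)%N.
    apply: (meas_index (F := fun a w => nth point (nth nullP (u w).2 k.-1 a) l)).
      by move=> a; exact: h7.
    exact: Aof_meas hdr i.
  by case: (l == k); [exact: Xof_meas hdr i | exact: measurable_cst].
Qed.

Lemma last_hp k dW (W : measurableType dW) (u : W -> @state d X) : stf k u ->
  forall w, last nullP (u w).2 = nth nullP (u w).2 k.-1.
Proof. by move=> [_ _ h3 _ _ _ _] w; rewrite -nth_last h3. Qed.

Lemma last_hx k dW (W : measurableType dW) (u : W -> @state d X) : stf k u ->
  forall w, last nullX (u w).1.1 = nth nullX (u w).1.1 k.-1.
Proof. by move=> [h1 _ _ _ _ _ _] w; rewrite -nth_last h1. Qed.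

Lemma fstep_good xstar k (hk1 : (0 < k)%N) (hk2 : (k < T)%N)
  dW (W : measurableType dW) (u : W -> @state d X) :
  stf k u -> pgood (stf k.+1) (fun w => fstep N M G xstar k (u w)).
Proof.
move=> hu.
have hkT : (0 < k <= T)%N by rewrite hk1 ltnW.
have hk' : (k.-1 < k)%N by rewrite ltn_predL.
have hlp := last_hp hu; have hlx := last_hx hu.
case: (hu) => [h1 h2 h3 h4 h5 h6 h7].
rewrite (_ : (fun w => fstep N M G xstar k (u w)) = fun w =>
   pbind (piid N.-1 (inner k (u w))) (fun dr => pret (newst xstar k (u w) dr))); last first.
  by apply/funext => w; rewrite fstep_eq.
apply: (pbind_good (P := seqf (nat * X)%type N.-1)).
  apply: (piid_good (p := fun w => inner k (u w))).
  rewrite /inner; apply: (pbind_good (P := mfam nat)).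
    have hs : forall w i, size (last nullP (u w).2 i) = k.
      by move=> w i; rewrite hlp h6 ?prednK.
    apply: pcateg_good.
    - apply: wts_meas => // i l.
      rewrite (_ : (fun w => _) = fun w => nth point (nth nullP (u w).2 k.-1 i) l).
        exact: h7.
      by apply/funext => w; rewrite hlp.
    - by move=> w i; exact: (wts_bounds hkT (hs w)).1.
    - by move=> w; exact: (wts_bounds hkT (hs w)).2.
  move=> dW' W' g a mg ma.
  apply: (pbind_good (P := mfam X)).
    apply: psample_good => U mU.
    have hMk : (1 < k.+1 <= T)%N by rewrite ltnS hk1 hk2.
    apply: (measurableT_comp (hM hMk mU)).
    rewrite (_ : (fun w => _) = fun w' => nth nullX (u (g w')).1.1 k.-1 (a w')).
      apply: (meas_index (F := fun i w' => nth nullX (u (g w')).1.1 k.-1 i)) => //.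
      by move=> i; exact: measurableT_comp (h4 _ _) mg.
    by apply/funext => w'; rewrite hlx.
  move=> dW'' W'' g' x mg' mx.
  apply: (pret_good (@mfam_closed _ (nat * X)%type)).
  apply: measurable_fun_pair => //.
  exact: measurableT_comp ma mg'.
move=> dW' W' g dr mg hdr.
apply: (pret_good (@stf_closed k.+1)).
apply: newst_stf => //.
exact: stf_closed hu.
Qed.

Lemma fwd_good xstar m (hm : (m < T)%N) dW (W : measurableType dW) (X1 : W -> nat -> X) :
  (forall i, measurable_fun setT (fun w => X1 w i)) ->
  pgood (stf m.+1) (fun w => fwd N M G xstar (X1 w) m).
Proof.
move=> mX1; elim: m hm => [|m IH] hm.
  apply: (pret_good (@stf_closed 1)); apply: StfR.
  - by [].
  - by [].
  - by [].
  - by move=> [|j] i /=; [exact: mX1 | exact: measurable_cst].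
  - by move=> [|j] i /=; exact: measurable_cst.
  - by case.
  - move=> [|j] i [|l] /=; try exact: measurable_cst.
    exact: mX1.
apply: (pbind_good (IH (ltnW hm))).
move=> dW' W' g u mg hu.
exact: fstep_good.
Qed.

Lemma mk_out_meas dW (W : measurableType dW) (hx : W -> seq (nat -> X)) (Bs : W -> seq nat)
  (V : W -> nat -> R) :
  (forall j i, measurable_fun setT (fun w => nth nullX (hx w) j i)) ->
  (forall j, measurable_fun setT (fun w => nth 0%N (Bs w) j)) ->
  (forall i, measurable_fun setT (fun w => V w i)) ->
  measurable_fun setT (fun w => mk_out N T (hx w) (Bs w) (V w)).
Proof.
move=> mx mB mV; rewrite /mk_out; apply: measurable_fun_pair.
  apply/measurable_fun_tnthP => i.
  apply: (eq_measurable_fun (fun w => nth nullX (hx w) i (nth 0%N (Bs w) i))).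
    by move=> w _ /=; rewrite tnth_mktuple.
  apply: (meas_index (F := fun a w => nth nullX (hx w) i a)); last exact: mB.
  by move=> a; exact: mx.
apply: measurable_fun_pair; first exact: (mB 0%N).
apply: measurable_fun_pair.
  apply/measurable_fun_tnthP => i.
  apply: (eq_measurable_fun (fun w => V w i)); last exact: mV.
  by move=> w _ /=; rewrite tnth_mktuple.
apply/measurable_fun_tnthP => i.
apply: (eq_measurable_fun (fun w => nth nullX (hx w) 0 i)); last exact: mx.
by move=> w _ /=; rewrite tnth_mktuple.
Qed.

Lemma size_trace r b : size (trace r b) = (size r).+1.
Proof. by elim: r b => //= a r IH b; rewrite size_rcons IH. Qed.

Lemma trace_meas n : forall dW (W : measurableType dW) (rha : W -> seq (nat -> nat))
  (b : W -> nat),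
  (forall w, size (rha w) = n) ->
  (forall j i, measurable_fun setT (fun w => nth (fun _ => 0%N) (rha w) j i)) ->
  measurable_fun setT b ->
  forall i, measurable_fun setT (fun w => nth 0%N (trace (rha w) (b w)) i).
Proof.
elim: n => [|n IH] dW W rha b hs hm mb i.
  rewrite (_ : (fun w => _) = fun w => nth 0%N [:: b w] i); last first.
    by apply/funext => w; rewrite (size0nil (hs w)).
  by case: i => [|i] /=; [exact: mb | case: i => *; exact: measurable_cst].
pose A0 := fun w => nth (fun _ => 0%N) (rha w) 0.
rewrite (_ : (fun w => _) = fun w =>
    nth 0%N (rcons (trace (behead (rha w)) (A0 w (b w))) (b w)) i); last first.
  apply/funext => w; rewrite /A0; move: (hs w).
  by case: (rha w).
have hsz : forall w, size (trace (behead (rha w)) (A0 w (b w))) = n.+1.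
  by move=> w; rewrite size_trace size_behead hs.
rewrite (_ : (fun w => _) = fun w => if (i < n.+1)%N then
    nth 0%N (trace (behead (rha w)) (A0 w (b w))) i else if i == n.+1 then b w else 0%N);
  last by apply/funext => w; rewrite nth_rcons hsz.
case: (i < n.+1)%N.
  apply: IH.
  - by move=> w; rewrite size_behead hs.
  - by move=> j i0; rewrite (_ : (fun w => _) = fun w => nth (fun _ => 0%N) (rha w) j.+1 i0);
      [exact: hm | apply/funext => w; rewrite nth_behead].
  - apply: (meas_index (F := fun a w => A0 w a)) => //.
    by move=> a; exact: hm.
by case: (i == n.+1); [exact: mb | exact: measurable_cst].
Qed.

Lemma rev_meas n dW (W : measurableType dW) (ha : W -> seq (nat -> nat)) :
  (forall w, size (ha w) = n) ->
  (forall j i, measurable_fun setT (fun w => nth (fun _ => 0%N) (ha w) j i)) ->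
  (forall j i, measurable_fun setT (fun w => nth (fun _ => 0%N) (rev (ha w)) j i)).
Proof.
move=> hs hm j i.
case hj: (j < n)%N.
  rewrite (_ : (fun w => _) = fun w => nth (fun _ => 0%N) (ha w) (n - j.+1) i).
    exact: hm.
  by apply/funext => w; rewrite nth_rev hs.
rewrite (_ : (fun w => _) = fun w => 0%N); first exact: measurable_cst.
by apply/funext => w; rewrite nth_default // size_rev hs leqNgt hj.
Qed.

Lemma sel_at_good dW (W : measurableType dW) (u : W -> @state d X) :
  stf T u -> pgood (mfam (out N T)) (fun w => sel_at G (u w)).
Proof.
move=> hu.
have hlp := last_hp hu.
case: (hu) => [h1 h2 h3 h4 h5 h6 h7].
have hTT : (0 < T <= T)%N by rewrite hT leqnn.
have h1T : (0 < 1 <= T)%N by rewrite hT.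
have hT' : (T.-1 < T)%N by rewrite ltn_predL.
rewrite (_ : (fun w => sel_at G (u w)) = fun w =>
    pbind (pcateg N (wts N G T (last nullP (u w).2))) (fun bT =>
      pret (mk_out N T (u w).1.1 (trace (rev (u w).1.2) bT)
                   (wts N G 1 (head nullP (u w).2))))); last first.
  by apply/funext => w; case: (u w) => [[hx ha] hp].
apply: (pbind_good (P := mfam nat)).
  have hs : forall w i, size (last nullP (u w).2 i) = T.
    by move=> w i; rewrite hlp h6 ?prednK.
  apply: pcateg_good.
  - apply: wts_meas => // i l.
    rewrite (_ : (fun w => _) = fun w => nth point (nth nullP (u w).2 T.-1 i) l).
      exact: h7.
    by apply/funext => w; rewrite hlp.
  - by move=> w i; exact: (wts_bounds hTT (hs w)).1.
  - by move=> w; exact: (wts_bounds hTT (hs w)).2.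
move=> dW' W' g b mg mb.
apply: (pret_good (@mfam_closed _ (out N T))).
apply: mk_out_meas.
- by move=> j i; exact: measurableT_comp (h4 j i) mg.
- move=> j; apply: (trace_meas (n := T.-1)) => //.
    by move=> w; rewrite size_rev h2.
  apply: (rev_meas (n := T.-1)).
    by move=> w; rewrite h2.
  by move=> j0 i; exact: measurableT_comp (h5 j0 i) mg.
- apply: wts_meas => //.
    move=> w i; have := h6 0%N i (g w) hT.
    by case: (u (g w)).2.
  move=> i l; have := measurableT_comp (h7 0%N i l) mg.
  by apply: eq_measurable_fun => w _ /=; case: (u (g w)).2.
Qed.

End CPF3.

Section CPF4.
Context {R : realType} {d : measure_display} {X : measurableType d}.
Variables (N T : nat) (M : nat -> X -> probability X R) (G : nat -> seq X -> R).
Hypothesis hM : forall k, (1 < k <= T)%N -> markov_kernel (M k).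
Hypothesis hGm : forall k, (0 < k <= T)%N ->
  measurable_fun setT (fun p : k.-tuple X => G k p).
Hypothesis hGpos : forall k (p : k.-tuple X), (0 < k <= T)%N -> 0 < G k p.
Hypothesis hT : (0 < T)%N.
Variables (m g : nat -> X -> X -> R).
Hypothesis hmm : forall k, (1 < k <= T)%N -> measurable_fun setT (fun xy : X * X => m k xy.1 xy.2).
Hypothesis hm0 : forall k x y, (1 < k <= T)%N -> 0 <= m k x y.
Hypothesis hgm : forall k, (1 < k <= T)%N -> measurable_fun setT (fun xy : X * X => g k xy.1 xy.2).
Hypothesis hGg : forall k (p : k.-tuple X), (1 < k <= T)%N ->
  G k p = g k (nth point p k.-2) (nth point p k.-1).

Lemma g_pos k x y : (1 < k <= T)%N -> 0 < g k x y.
Proof.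
case: k => [|[|k]] // hk.
pose s := nseq k x ++ [:: x; y].
have hs : size s == k.+2 by rewrite /s size_cat size_nseq addn2.
have := hGg (Tuple hs) hk; rewrite /= /s !nth_cat size_nseq ltnn subnn /=.
rewrite (_ : (k.+1 < k)%N = false); last by rewrite ltnNge ltnW.
rewrite subSnn /= => <-.
have hk' : (0 < k.+2 <= T)%N by case/andP: hk.
exact: (G_pos hGpos hk' (eqP hs)).
Qed.

End CPF4.

Section CPF5.
Context {R : realType} {d : measure_display} {X : measurableType d}.
Variables (N T : nat) (M : nat -> X -> probability X R) (G : nat -> seq X -> R).
Hypothesis hM : forall k, (1 < k <= T)%N -> markov_kernel (M k).
Hypothesis hGm : forall k, (0 < k <= T)%N ->
  measurable_fun setT (fun p : k.-tuple X => G k p).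
Hypothesis hGpos : forall k (p : k.-tuple X), (0 < k <= T)%N -> 0 < G k p.
Hypothesis hT : (0 < T)%N.
Variables (m g : nat -> X -> X -> R).
Hypothesis hmm : forall k, (1 < k <= T)%N -> measurable_fun setT (fun xy : X * X => m k xy.1 xy.2).
Hypothesis hm0 : forall k x y, (1 < k <= T)%N -> 0 <= m k x y.
Hypothesis hgm : forall k, (1 < k <= T)%N -> measurable_fun setT (fun xy : X * X => g k xy.1 xy.2).
Hypothesis hGg : forall k (p : k.-tuple X), (1 < k <= T)%N ->
  G k p = g k (nth point p k.-2) (nth point p k.-1).

Definition vu (st : @state d X) k bn j : R :=
  wts N G k (nth nullP st.2 k.-1) j * m k.+1 (nth nullX st.1.1 k.-1 j) (nth nullX st.1.1 k bn)
   * g k.+1 (nth nullX st.1.1 k.-1 j) (nth nullX st.1.1 k bn).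

Lemma vwts_eq st k bn i :
  vwts N G m g st k bn i = vu st k bn i / \sum_(0 <= j < N) vu st k bn j.
Proof. by case: st => [[hx ha] hp]. Qed.

Lemma vw_props k (hk1 : (0 < k)%N) (hk2 : (k < T)%N) dW (W : measurableType dW)
  (st : W -> @state d X) (bn : W -> nat) :
  stf T st -> measurable_fun setT bn ->
  [/\ forall i, measurable_fun setT (fun w => vwts N G m g (st w) k (bn w) i),
      forall w i, 0 <= vwts N G m g (st w) k (bn w) i &
      forall w, \sum_(0 <= i < N) vwts N G m g (st w) k (bn w) i <= 1].
Proof.
move=> [h1 h2 h3 h4 h5 h6 h7] mbn.
have hkT : (0 < k <= T)%N by rewrite hk1 ltnW.
have hk1T : (1 < k.+1 <= T)%N by rewrite ltnS hk1 hk2.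
have hk' : (k.-1 < T)%N by exact: leq_ltn_trans (leq_pred k) hk2.
have hsz : forall w j, size (nth nullP (st w).2 k.-1 j) = k.
  by move=> w j; rewrite (h6 _ _ _ hk') (prednK hk1).
have u0 : forall w j, 0 <= vu (st w) k (bn w) j.
  move=> w j; rewrite /vu; apply: mulr_ge0; first apply: mulr_ge0.
  - exact: (wts_bounds N hGpos hkT (hsz w)).1 j.
  - exact: hm0.
  - exact: ltW (g_pos hGpos hGg _ _ hk1T).
have mu : forall j, measurable_fun setT (fun w => vu (st w) k (bn w) j).
  move=> j; rewrite /vu.
  have mX : measurable_fun setT (fun w => (nth nullX (st w).1.1 k.-1 j, nth nullX (st w).1.1 k (bn w))).
    apply: measurable_fun_pair; first exact: h4.
    apply: (meas_index (F := fun a w => nth nullX (st w).1.1 k a)); last exact: mbn.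
    by move=> a; exact: h4.
  apply: measurable_funM; first apply: measurable_funM.
  - apply: (wts_meas N hGm hkT); first exact: hsz.
    by move=> i l; exact: h7.
  - exact: measurableT_comp (hmm hk1T) mX.
  - exact: measurableT_comp (hgm hk1T) mX.
split.
- move=> i; rewrite (_ : (fun w => _) = fun w =>
      vu (st w) k (bn w) i / \sum_(0 <= j < N) vu (st w) k (bn w) j); last first.
    by apply/funext => w; rewrite vwts_eq.
  apply: measurable_div => //; apply: measurable_sum => j; exact: mu.
- move=> w i; rewrite vwts_eq; apply: divr_ge0 => //.
  by apply: sumr_ge0 => j _.
- move=> w; under eq_bigr do rewrite vwts_eq.
  rewrite -mulr_suml.
  have [->|hS] := eqVneq (\sum_(0 <= j < N) vu (st w) k (bn w) j) 0.
    by rewrite invr0 mulr0 ler01.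
  by rewrite mulfV.
Qed.

Record bwfR j dW (W : measurableType dW) (r : W -> seq (nat * (nat -> R))) : Prop := BwfR {
  b_s : forall w, size (r w) = j;
  b_1 : forall l, measurable_fun setT (fun w => (nth (0%N, fun _ => 0) (r w) l).1);
  b_2 : forall l i, measurable_fun setT (fun w => (nth (0%N, fun _ => 0) (r w) l).2 i) }.

Definition bwf j : fam (seq (nat * (nat -> R))) := fun dW W r => @bwfR j dW W r.

Lemma bwf_closed j : fclosed (bwf j).
Proof.
move=> dW W dW' W' h r mh [h1 h2 h3]; split.
- by move=> w; exact: h1.
- by move=> l; exact: measurableT_comp (h2 l) mh.
- by move=> l i; exact: measurableT_comp (h3 l i) mh.
Qed.

Lemma bwd_good j : (j < T)%N -> forall dW (W : measurableType dW)
  (st : W -> @state d X) (bn : W -> nat),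
  stf T st -> measurable_fun setT bn ->
  pgood (bwf j) (fun w => bwd N G m g (st w) j (bn w)).
Proof.
elim: j => [|j IH] hj dW W st bn hst mbn.
  apply: (pret_good (@bwf_closed 0) (u := fun _ => [::])); apply: BwfR.
  - by [].
  - by move=> l /=; exact: measurable_cst.
  - by move=> l i /=; exact: measurable_cst.
have [mV V0 V1] := vw_props (ltn0Sn j) hj hst mbn.
rewrite (_ : (fun w => bwd N G m g (st w) j.+1 (bn w)) = fun w =>
   pbind (pcateg N (vwts N G m g (st w) j.+1 (bn w))) (fun b =>
     pbind (bwd N G m g (st w) j b) (fun r => pret (rcons r (b, vwts N G m g (st w) j.+1 (bn w))))));
  last by [].
apply: (pbind_good (P := mfam nat)); first exact: pcateg_good.
move=> dW' W' g' b mg' mb.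
apply: (pbind_good (P := bwf j)).
  apply: (IH (ltnW hj)) => //.
  exact: stf_closed hst.
move=> dW'' W'' g'' r mg'' [hs h1 h2].
apply: (pret_good (@bwf_closed j.+1)); apply: BwfR.
- by move=> w; rewrite /= size_rcons hs.
- move=> l.
  rewrite (_ : (fun w => _) = fun w => if (l < j)%N then (nth (0%N, fun _ => 0) (r w) l).1
       else if l == j then b (g'' w) else 0%N); last first.
    by apply/funext => w; rewrite /= nth_rcons hs; case: ifP => //; case: ifP.
  case: (l < j)%N; first exact: h1.
  case: (l == j); last exact: measurable_cst.
  exact: measurableT_comp mb mg''.
- move=> l i.
  rewrite (_ : (fun w => _) = fun w => if (l < j)%N then (nth (0%N, fun _ => 0) (r w) l).2 i
       else if l == j then vwts N G m g (st (g' (g'' w))) j.+1 (bn (g' (g'' w))) i else 0); last first.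
    by apply/funext => w; rewrite /= nth_rcons hs; case: ifP => //; case: ifP.
  case: (l < j)%N; first exact: h2.
  case: (l == j); last exact: measurable_cst.
  exact: measurableT_comp (measurableT_comp (mV i) mg') mg''.
Qed.

Lemma nth_map_fst_rcons (r : seq (nat * (nat -> R))) x l :
  nth 0%N (map fst (rcons r x)) l =
  if (l < size r)%N then (nth (0%N, fun _ => 0) r l).1 else if l == size r then x.1 else 0%N.
Proof.
rewrite map_rcons nth_rcons size_map; case: ifP => hl //.
by rewrite (nth_map (0%N, fun _ => 0)).
Qed.

Lemma head_rcons_nth (T' : Type) (x0 y0 x : T') r :
  head x0 (rcons r x) = if (0 < size r)%N then nth y0 r 0 else x.
Proof. by case: r. Qed.

Lemma sel_bs_good dW (W : measurableType dW) (u : W -> @state d X) :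
  stf T u -> pgood (mfam (out N T)) (fun w => sel_bs G m g (u w)).
Proof.
move=> hu.
have hlp := last_hp hu.
case: (hu) => [h1 h2 h3 h4 h5 h6 h7].
have hTT : (0 < T <= T)%N by rewrite hT leqnn.
have hT' : (T.-1 < T)%N by rewrite ltn_predL.
have hs : forall w i, size (last nullP (u w).2 i) = T.
  by move=> w i; rewrite hlp h6 ?prednK.
have mWT : forall i, measurable_fun setT (fun w => wts N G T (last nullP (u w).2) i).
  apply: (wts_meas N hGm hTT); first exact: hs.
  move=> i l; rewrite (_ : (fun w => _) = fun w => nth point (nth nullP (u w).2 T.-1 i) l).
    exact: h7.
  by apply/funext => w; rewrite hlp.
rewrite (_ : (fun w => sel_bs G m g (u w)) = fun w =>
  pbind (pcateg N (wts N G T (last nullP (u w).2))) (fun bT =>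
   pbind (bwd N G m g (u w) T.-1 bT) (fun r =>
     pret (mk_out N T (u w).1.1 (map fst (rcons r (bT, wts N G T (last nullP (u w).2))))
        (head (0%N, wts N G T (last nullP (u w).2))
              (rcons r (bT, wts N G T (last nullP (u w).2)))).2)))); last first.
  by apply/funext => w; case: (u w) => [[hx ha] hp].
apply: (pbind_good (P := mfam nat)).
  apply: pcateg_good.
  - exact: mWT.
  - by move=> w i; exact: (wts_bounds N hGpos hTT (hs w)).1.
  - by move=> w; exact: (wts_bounds N hGpos hTT (hs w)).2.
move=> dW' W' g' b mg' mb.
apply: (pbind_good (P := bwf T.-1)).
  apply: bwd_good => //.
  exact: stf_closed hu.
move=> dW'' W'' g'' r mg'' [hsr hb1 hb2].
apply: (pret_good (@mfam_closed _ (out N T))).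
apply: mk_out_meas.
- by move=> j i; exact: measurableT_comp (measurableT_comp (h4 j i) mg') mg''.
- move=> l.
  rewrite (_ : (fun w => _) = fun w => if (l < T.-1)%N then (nth (0%N, fun _ => 0) (r w) l).1
       else if l == T.-1 then b (g'' w) else 0%N); last first.
    by apply/funext => w; rewrite nth_map_fst_rcons hsr.
  case: (l < T.-1)%N; first exact: hb1.
  case: (l == T.-1); last exact: measurable_cst.
  exact: measurableT_comp mb mg''.
- move=> i.
  rewrite (_ : (fun w => _) = fun w => if (0 < T.-1)%N then (nth (0%N, fun _ => 0) (r w) 0).2 i
       else wts N G T (last nullP (u (g' (g'' w))).2) i); last first.
    by apply/funext => w; rewrite (head_rcons_nth _ (0%N, fun _ => 0)) hsr; case: ifP.
  case: (0 < T.-1)%N; first exact: hb2.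
  exact: measurableT_comp (measurableT_comp (mWT i) mg') mg''.
Qed.

Definition X1f (xstar : seq X) (xs : seq X) (i : nat) : X :=
  if i == 0%N then nth point xstar 0 else nth point xs i.-1.

Lemma K_good xstar (sel : @state d X -> prog R (@out R d X N T))
  (hsel : forall dW (W : measurableType dW) (u : W -> @state d X),
     stf T u -> pgood (mfam (@out R d X N T)) (fun w => sel (u w)))
  (kout : out N T -> \bar R) (mk : measurable_fun setT kout)
  (bk : forall o, (`|kout o| <= 1)%E) :
  kgood (seqf X N.-1)
    (fun _ : unit => fun xs => fwd N M G xstar (X1f xstar xs) T.-1 (fun st => sel st kout)).
Proof.
move=> dW W g0 u mg0 [hs hm].
have mX1 : forall i, measurable_fun setT (fun w => X1f xstar (u w) i).
  by move=> [|i]; rewrite /X1f /=; [exact: measurable_cst | exact: hm].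
have pf : pgood (stf T) (fun w => fwd N M G xstar (X1f xstar (u w)) T.-1).
  have hT' : (T.-1 < T)%N by rewrite ltn_predL.
  have := fwd_good N hM hGm hGpos xstar hT' mX1.
  by rewrite prednK.
have pg : pgood (mfam (@out R d X N T))
    (fun w => pbind (fwd N M G xstar (X1f xstar (u w)) T.-1) (fun st => sel st)).
  apply: (pbind_good pf) => dW' W' g' v mg' hv.
  exact: hsel.
have hk : kgood (mfam (@out R d X N T)) (fun _ : unit => kout).
  move=> dW'' W'' g'' u'' mg'' mu''; split; last by move=> w; exact: bk.
  exact: measurableT_comp mk mu''.
have [mm bb] := pg _ unit _ hk.
split; last by move=> w; exact: bb tt w.
have -> : (fun w => fwd N M G xstar (X1f xstar (u w)) T.-1 (fun st => sel st kout)) =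
  (fun zy : unit * W => pbind (fwd N M G xstar (X1f xstar (u zy.2)) T.-1) (fun st => sel st) kout)
    \o (fun w => (tt, w)) by [].
apply: (measurableT_comp mm); apply: measurable_fun_pair; first exact: measurable_cst.
exact: (@measurable_id _ _ setT).
Qed.

End CPF5.

Section MainLemmas.
Context {R : realType}.
Local Open Scope ereal_scope.

Lemma kdist_bound d1 (Z : measurableType d1) d2 (Y : measurableType d2)
  (P1 P2 : Z -> prog R Y) (c : \bar R) :
  (forall z (f : Y -> R), measurable_fun setT f -> (forall y, `|f y| <= 1)%R ->
     P1 z (fun y => (f y)%:E) - P2 z (fun y => (f y)%:E) <= c) ->
  kdist P1 P2 <= c.
Proof.
move=> H; apply: ge_ereal_sup => _ [z _ <-]; apply: ge_ereal_sup => _ [f [mf bf] <-].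
exact: H.
Qed.

Lemma tv_ge d1 (Z : measurableType d1) d2 (Y : measurableType d2)
  (P1 P2 : Z -> prog R Y) z (f : Y -> R) :
  measurable_fun setT f -> (forall y, `|f y| <= 1)%R ->
  P1 z (fun y => (f y)%:E) - P2 z (fun y => (f y)%:E) <= kdist P1 P2.
Proof.
move=> mf bf.
have h1 : P1 z (fun y => (f y)%:E) - P2 z (fun y => (f y)%:E) <= tv_dist (P1 z) (P2 z).
  by apply: ereal_sup_ubound; exists f.
have h2 : tv_dist (P1 z) (P2 z) <= kdist P1 P2.
  by apply: ereal_sup_ubound; exists z.
exact: le_trans h1 h2.
Qed.

Lemma kprog_fin d' (X : measurableType d') (Q1 Q2 : X -> probability X R) :
  kdist (kprog Q1) (kprog Q2) \is a fin_num.
Proof.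
have ub : kdist (kprog Q1) (kprog Q2) <= 2%:E.
  apply: kdist_bound => z f mf bf.
  have mfE : measurable_fun setT (fun x => (f x)%:E) by apply/measurable_EFinP.
  have bE : forall x, `|(f x)%:E| <= 1%:E by move=> x; rewrite abse_EFin lee_fin.
  have [_ b1] := bounded_int (Q1 z) mfE bE.
  have [_ b2] := bounded_int (Q2 z) mfE bE.
  rewrite /kprog /psample.
  have fa := fin_bound b1; have fb := fin_bound b2; move: b1 b2.
  rewrite -(fineK fa) -(fineK fb) -EFinB !abse_EFin !lee_fin.
  move=> /ler_normlP [h1 h2] /ler_normlP [h3 h4]; lra.
have lb : 0 <= kdist (kprog Q1) (kprog Q2).
  have mf0 : measurable_fun setT (fun _ : X => (0:R)%R) by exact: measurable_cst.
  have bf0 : forall y : X, (`|(fun _ : X => (0:R)%R) y| <= 1)%R by move=> y; rewrite normr0.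
  have := tv_ge (kprog Q1) (kprog Q2) point mf0 bf0.
  by rewrite /kprog /psample !integral0_eq // subee.
move: lb ub; case: (kdist (kprog Q1) (kprog Q2)) => //.
Qed.

Lemma kprog_tvle d' (X : measurableType d') (Q1 Q2 : X -> probability X R) x :
  tvle (Q1 x) (Q2 x) (fine (kdist (kprog Q1) (kprog Q2))).
Proof.
move=> f mf bf; rewrite fineK ?kprog_fin //.
exact: (tv_ge (kprog Q1) (kprog Q2) x mf bf).
Qed.

End MainLemmas.

Unset Implicit Arguments.
Set Strict Implicit.

Theorem lemma1 (R : realType) (d : measure_display) (X : measurableType d)
  (N T : nat) (hN : (0 < N)%N) (hT : (0 < T)%N)
  (M : nat -> X -> probability X R) (G : nat -> seq X -> R)
  (hM : forall k, (1 < k <= T)%N -> markov_kernel (M k))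
  (hGm : forall k, (0 < k <= T)%N -> measurable_fun setT (fun p : k.-tuple X => G k p))
  (hGpos : forall k (p : k.-tuple X), (0 < k <= T)%N -> 0 < G k p)
  (Q1 Q2 : X -> probability X R) (hQ1 : markov_kernel Q1) (hQ2 : markov_kernel Q2) :
  (* ancestor tracing *)
  (kdist (P_aicpf N T M G (fun _ _ _ => 0%R) (fun _ _ _ => 0%R) false Q1)
         (P_aicpf N T M G (fun _ _ _ => 0%R) (fun _ _ _ => 0%R) false Q2)
     <= N%:R%:E * kdist (kprog Q1) (kprog Q2))%E /\
  (* backward sampling *)
  (forall (nu : {measure set X -> \bar R}) (m g : nat -> X -> X -> R),
     sigma_finite setT nu ->
     (forall k, (1 < k <= T)%N -> measurable_fun setT (fun xy : X * X => m k xy.1 xy.2)) ->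
     (forall k x y, (1 < k <= T)%N -> 0 <= m k x y) ->
     (forall k x A, (1 < k <= T)%N -> measurable A ->
        M k x A = (\int[nu]_(y in A) (m k x y)%:E)%E) ->
     (forall k, (1 < k <= T)%N -> measurable_fun setT (fun xy : X * X => g k xy.1 xy.2)) ->
     (forall k (p : k.-tuple X), (1 < k <= T)%N ->
        G k p = g k (nth point p k.-2) (nth point p k.-1)) ->
     (kdist (P_aicpf N T M G m g true Q1) (P_aicpf N T M G m g true Q2)
        <= N%:R%:E * kdist (kprog Q1) (kprog Q2))%E /\
     (kdist (Ptilde_aicpf N T M G m g Q1) (Ptilde_aicpf N T M G m g Q2)
        <= N%:R%:E * kdist (kprog Q1) (kprog Q2))%E).
Proof.
have hkd := kprog_fin Q1 Q2.
set dl := fine (kdist (kprog Q1) (kprog Q2)).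
have hE : kdist (kprog Q1) (kprog Q2) = dl%:E by rewrite /dl fineK.
have htv : forall x, tvle (Q1 x) (Q2 x) dl := kprog_tvle Q1 Q2.
have gen : forall (sel : @state d X -> prog R (@out R d X N T)),
   (forall dW (W : measurableType dW) (u : W -> @state d X), stf T u ->
      pgood (mfam (@out R d X N T)) (fun w => sel (u w))) ->
   forall (xstar : seq X) (kout : @out R d X N T -> \bar R),
   measurable_fun setT kout -> (forall o, (`|kout o| <= 1)%E) ->
   (`| \int[Q1 (nth point xstar 0)]_x0 piid N.-1 (psample (Q1 x0))
         (fun xs => fwd N M G xstar (X1f xstar xs) T.-1 (fun st => sel st kout))
    - \int[Q2 (nth point xstar 0)]_x0 piid N.-1 (psample (Q2 x0))
         (fun xs => fwd N M G xstar (X1f xstar xs) T.-1 (fun st => sel st kout)) |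
    <= (N%:R * dl)%:E)%E.
  move=> sel hsel xstar kout mk bk.
  have hK := K_good hM hGm hGpos hT xstar hsel mk bk.
  have := core hQ1 hQ2 htv (nth point xstar 0) hK.
  by rewrite prednK.
split.
  rewrite hE -EFinM; apply: kdist_bound => xstar f mf bf.
  apply: le_trans (lee_abs _) _.
  have mk : measurable_fun setT (fun o : @out R d X N T => (f o.1)%:E).
    by apply/measurable_EFinP; exact: measurableT_comp mf measurable_fst.
  have bk : forall o : @out R d X N T, (`|(f o.1)%:E| <= 1)%E.
    by move=> o; rewrite abse_EFin lee_fin.
  exact: (gen (sel_at G) (fun dW W u hu => sel_at_good (N:=N) hGm hGpos hT hu) xstar _ mk bk).
move=> nu m g hsf hmm hm0 hMd hgm hGg.
have hselbs : forall dW (W : measurableType dW) (u : W -> @state d X), stf T u ->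
    pgood (mfam (@out R d X N T)) (fun w => sel_bs G m g (u w)).
  by move=> dW W u hu; exact: (sel_bs_good (N:=N) hGm hGpos hT hmm hm0 hgm hGg hu).
split.
  rewrite hE -EFinM; apply: kdist_bound => xstar f mf bf.
  apply: le_trans (lee_abs _) _.
  have mk : measurable_fun setT (fun o : @out R d X N T => (f o.1)%:E).
    by apply/measurable_EFinP; exact: measurableT_comp mf measurable_fst.
  have bk : forall o : @out R d X N T, (`|(f o.1)%:E| <= 1)%E.
    by move=> o; rewrite abse_EFin lee_fin.
  exact: (gen (sel_bs G m g) hselbs xstar _ mk bk).
rewrite hE -EFinM; apply: kdist_bound => z f mf bf.
apply: le_trans (lee_abs _) _.
have mk : measurable_fun setT (fun o : @out R d X N T => (f o)%:E).
  by apply/measurable_EFinP.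
have bk : forall o : @out R d X N T, (`|(f o)%:E| <= 1)%E.
  by move=> o; rewrite abse_EFin lee_fin.
exact: (gen (sel_bs G m g) hselbs z.1 _ mk bk).
Qed.
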